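(* The Chabauty space $\mathcal{C}(\mathbf{Z}^2)$ is homeomorphic to $\overline{\mathbf{N}}^2$.
   Context: For a discrete group $G$, $\mathcal{C}(G)$ is the set of subgroups of $G$ with the Chabauty topology (the topology induced by the product topology on $\{0,1\}^G$). $\overline{\mathbf{N}}=\mathbf{N}\cup\{\infty\}$ is the one-point compactification of $\mathbf{N}$. *)

(* Defs.v *)
From HB Require Import structures.
From mathcomp Require Import all_boot all_order all_algebra.
From mathcomp Require Import all_classical all_reals all_analysis.
Set Implicit Arguments. Unset Strict Implicit. Unset Printing Implicit Defensive.
Import Order.TTheory GRing.Theory Num.Theory.
Local Open Scope classical_set_scope.
Local Open Scope ring_scope.

Definition Z2 : Type := (int * int)%type.

(** {0,1}^(Z^2) with the product topology (bool is discrete). A subset of Z^2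
    is identified with its indicator function. *)
Definition indicator_space : topologicalType := {ptws Z2 -> bool}.

Definition is_subgroup_Z2 (H : Z2 -> bool) : Prop :=
  H (0, 0) /\
  (forall x y : Z2, H x -> H y -> H (x.1 - y.1, x.2 - y.2)).

Definition subgroups_Z2 : set indicator_space := [set H | is_subgroup_Z2 H].

Definition Chabauty_Z2 : topologicalType := set_type subgroups_Z2.

Definition Nbar : topologicalType := one_point_compactification nat.

Definition homeomorphic (X Y : topologicalType) : Prop :=
  exists (f : X -> Y) (g : Y -> X),
    cancel f g /\ cancel g f /\ continuous f /\ continuous g.

(* Main.v *)
Require Import Defs.
From HB Require Import structures.
From mathcomp Require Import all_boot all_order all_algebra.
From mathcomp Require Import all_classical all_reals all_analysis.
From mathcomp Require Import zify ring.
Set Implicit Arguments. Unset Strict Implicit. Unset Printing Implicit Defensive.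
Import Order.TTheory GRing.Theory Num.Theory.
Local Open Scope classical_set_scope.
Local Open Scope ring_scope.

Definition det (x y : Z2) : int := x.1 * y.2 - x.2 * y.1.
Definition lc (a : int) (x : Z2) (b : int) (y : Z2) : Z2 :=
  (a * x.1 + b * y.1, a * x.2 + b * y.2).

Section SG.
Variable H : Z2 -> bool.
Hypothesis sH : is_subgroup_Z2 H.

Lemma sg0 : H (0, 0). Proof. by case: sH. Qed.

Lemma sg_opp x : H x -> H (- x.1, - x.2).
Proof.
move=> Hx; have := sH.2 _ _ sg0 Hx; by rewrite /= !sub0r.
Qed.

Lemma sg_add x y : H x -> H y -> H (x.1 + y.1, x.2 + y.2).
Proof.
move=> Hx Hy; have := sH.2 _ _ Hx (sg_opp Hy); by rewrite /= !opprK.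
Qed.

Lemma sg_natmul (n : nat) x : H x -> H (n%:Z * x.1, n%:Z * x.2).
Proof.
move=> Hx; elim: n => [|n IH]; first by rewrite !mul0r sg0.
have := sg_add IH Hx; by rewrite /= -!(addn1 n) !PoszD !mulrDl !mul1r.
Qed.

Lemma sg_mul (k : int) x : H x -> H (k * x.1, k * x.2).
Proof.
move=> Hx; case: k => n; first exact: sg_natmul.
have := sg_opp (sg_natmul n.+1 Hx); by rewrite /= NegzE !mulNr.
Qed.

Lemma sg_lc a b x y : H x -> H y -> H (lc a x b y).
Proof. by move=> Hx Hy; have := sg_add (sg_mul a Hx) (sg_mul b Hy). Qed.

Lemma sg_eq x y : x = y -> H x -> H y. Proof. by move=> ->. Qed.

End SG.

Lemma sgE (H : Z2 -> bool) x y : H x -> x = y -> H y. Proof. by move=> Hx <-. Qed.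

Definition zeroZ : Z2 -> bool := fun x => x == (0, 0).
Definition Lin (H : Z2 -> bool) : Prop :=
  [/\ is_subgroup_Z2 H, (exists x, H x /\ x != (0, 0)) &
      forall x y, H x -> H y -> det x y = 0].
Definition Fin (H : Z2 -> bool) : Prop :=
  is_subgroup_Z2 H /\ exists x y, [/\ H x, H y & det x y != 0].
Definition cyc (g : Z2) : Z2 -> bool :=
  fun x => `[< exists k : int, x = (k * g.1, k * g.2) >].

Lemma partition H : is_subgroup_Z2 H -> [\/ H = zeroZ, Lin H | Fin H].
Proof.
move=> sH.
have [[x [y [Hx Hy dxy]]]|nF] := pselect (exists x y, [/\ H x, H y & det x y != 0]).
  by apply: Or33; split => //; exists x, y.
have [[x [Hx x0]]|nz] := pselect (exists x, H x /\ x != (0, 0)).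
  apply: Or32; split => //; first by exists x.
  move=> a b Ha Hb; apply/eqP; apply: contrapT => /negP dab; apply: nF.
  by exists a, b.
apply: Or31; apply: funext => x; rewrite /zeroZ.
have [->|x0] := eqVneq x (0, 0); first exact: (sg0 sH).
by apply/negP => Hx; apply: nz; exists x.
Qed.

Lemma Lin_Fin H : Lin H -> Fin H -> False.
Proof. by case=> _ _ col [_ [x [y [Hx Hy /eqP]]]]; apply; apply: col. Qed.

Lemma Lin_zero : ~ Lin zeroZ.
Proof. by case=> _ [x [/eqP -> /eqP]]. Qed.

Lemma Fin_zero : ~ Fin zeroZ.
Proof. by case=> _ [x [y [/eqP -> /eqP ->]]]. Qed.

Lemma cyc_sub g : is_subgroup_Z2 (cyc g).
Proof.
split; first by apply/asboolP; exists 0; rewrite !mul0r.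
move=> x y /asboolP [k ->] /asboolP [l ->]; apply/asboolP; exists (k - l).
by rewrite !mulrBl.
Qed.

Lemma cyc_g g : cyc g g.
Proof. by apply/asboolP; exists 1; rewrite !mul1r; case: g. Qed.

Lemma cyc_Lin g : g != (0, 0) -> Lin (cyc g).
Proof.
move=> g0; split; [exact: cyc_sub| by exists g; split => //; exact: cyc_g|].
move=> x y /asboolP [k ->] /asboolP [l ->]; rewrite /det /=; ring.
Qed.

Lemma cyc_gen H (phi : Z2 -> int) :
  is_subgroup_Z2 H ->
  (forall a x b y, phi (lc a x b y) = a * phi x + b * phi y) ->
  (exists x, H x /\ phi x != 0) ->
  (forall y, H y -> phi y = 0 -> y = (0, 0)) ->
  exists g, g != (0, 0) /\ forall x, H x = cyc g x.
Proof.
move=> sH phil [x1 [Hx1 px1]] phi0.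
pose P n := `[< exists x, H x /\ `|phi x|%N = n >] && (0 < n)%N.
have Pex : exists n, P n.
  exists `|phi x1|%N; apply/andP; split; first by apply/asboolP; exists x1.
  by rewrite absz_gt0.
case: (ex_minnP Pex) => a /andP [/asboolP [x0 [Hx0 ax0]] a0] amin.
pose e : int := if 0 < phi x0 then 1 else -1.
pose g := lc e x0 0 x0.
have Hg : H g by apply: sg_lc.
have pg : phi g = a%:Z.
  rewrite /g phil mul0r addr0 -ax0 /e; case: ifP => p0.
    by rewrite mul1r gtz0_abs.
  rewrite mulN1r lez0_abs //; rewrite leNgt p0 //.
have pg0 : 0 < phi g by rewrite pg ltz_nat.
exists g; split.
  apply/negP => /eqP g0; move: pg0; rewrite g0.
  have -> : ((0 : int), (0 : int)) = lc 0 g 0 g by rewrite /lc !mul0r addr0.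
  by rewrite phil !mul0r addr0 ltxx.
move=> x; apply/idP/idP; last first.
  by move=> /asboolP [k ->]; apply: sg_mul.
move=> Hx; apply/asboolP.
set q := (phi x %/ phi g)%Z; set r := (phi x %% phi g)%Z.
have Hy : H (lc 1 x (- q) g) by apply: sg_lc.
have py : phi (lc 1 x (- q) g) = r.
  by rewrite phil mul1r mulNr [phi x in LHS](divz_eq (phi x) (phi g)) -/q -/r addrAC subrr add0r.
have r0 : r = 0.
  have rge : 0 <= r by apply: modz_ge0; rewrite gt_eqF.
  have rlt : r < phi g by apply: ltz_pmod.
  apply/eqP; apply: contraT => rn0.
  have : P `|r|%N.
    apply/andP; split; last by rewrite absz_gt0.
    by apply/asboolP; exists (lc 1 x (- q) g); rewrite py.
  move/amin; rewrite pg in rlt; lia.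
have := phi0 _ Hy; rewrite py r0 => /(_ erefl) [e1 e2].
exists q; rewrite /lc /= !mul1r !mulNr in e1 e2.
apply: injective_projections => /=.
- by apply/eqP; rewrite -subr_eq0; apply/eqP; exact: e1.
- by apply/eqP; rewrite -subr_eq0; apply/eqP; exact: e2.
Qed.

Lemma Lin_cyc H : Lin H -> exists g, g != (0, 0) /\ H = cyc g.
Proof.
case=> sH [z [Hz z0]] col.
suff [g [g0 Hg]] : exists g, g != (0, 0) /\ forall x, H x = cyc g x.
  by exists g; split => //; apply: funext.
have [[x [Hx x1]]|nA] := pselect (exists x, H x /\ x.1 != 0).
  apply: (@cyc_gen H fst) => //; first by exists x.
  move=> y Hy y1; have := col _ _ Hy Hx; rewrite /det y1 mul0r sub0r => /eqP.
  rewrite oppr_eq0 mulf_eq0 (negbTE x1) orbF => /eqP y2.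
  by apply: injective_projections.
have A0 : forall y, H y -> y.1 = 0.
  by move=> y Hy; apply/eqP; apply: contraT => y1; by case: nA; exists y.
apply: (@cyc_gen H snd) => //.
  exists z; split => //; apply: contra z0 => /eqP z2.
  by apply/eqP; apply: injective_projections => //=; exact: A0.
move=> y Hy y2; apply: injective_projections => //=; exact: A0.
Qed.

Definition sel (H : Z2 -> bool) : Z2 :=
  xget (0, 0) [set s | [/\ H s, s != (0, 0) &
     forall x, H x -> x != (0, 0) -> (pickle s <= pickle x)%N]].

Lemma sel_spec (H : Z2 -> bool) : (exists x, H x /\ x != (0, 0)) ->
  [/\ H (sel H), sel H != (0, 0) &
     forall x, H x -> x != (0, 0) -> (pickle (sel H) <= pickle x)%N].
Proof.
move=> [x0 [Hx0 x00]].
pose P n := `[< exists x, [/\ H x, x != (0, 0) & pickle x = n] >].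
have Pex : exists n, P n by exists (pickle x0); apply/asboolP; exists x0.
case: (ex_minnP Pex) => n /asboolP [x [Hx x0' px]] nmin.
set S := [set s | [/\ H s, s != (0, 0) &
     forall x, H x -> x != (0, 0) -> (pickle s <= pickle x)%N]].
suff : S (xget (0, 0) S) by [].
case: xgetP => // Hn; apply: (Hn x); split => //.
move=> y Hy y0; rewrite px; apply: nmin; apply/asboolP; by exists y.
Qed.

Definition rowOf (H : Z2 -> bool) : Z2 -> bool :=
  fun x => H x && (det x (sel H) == 0).

Lemma coll3 s x y : s != (0, 0) -> det x s = 0 -> det y s = 0 -> det x y = 0.
Proof.
move=> s0 xs ys.
have e1 : det x y * s.1 = det x s * y.1 - det y s * x.1 by rewrite /det; ring.
have e2 : det x y * s.2 = det x s * y.2 - det y s * x.2 by rewrite /det; ring.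
rewrite xs ys !mul0r subrr in e1 e2.
move/eqP: e1; rewrite mulf_eq0 => /orP [/eqP //|/eqP s1].
move/eqP: e2; rewrite mulf_eq0 => /orP [/eqP //|/eqP s2].
by move: s0; rewrite [s]surjective_pairing s1 s2 eqxx.
Qed.

Lemma Fin_nz (H : Z2 -> bool) : Fin H -> exists x, H x /\ x != (0, 0).
Proof.
case=> sH [x [y [Hx Hy dxy]]]; exists x; split => //.
by apply: contra dxy => /eqP ->; rewrite /det /= !mul0r subrr.
Qed.

Lemma rowOf_Lin H : Fin H -> Lin (rowOf H).
Proof.
move=> FH; have [sel1 sel0 selm] := sel_spec (Fin_nz FH).
have sH := FH.1.
split.
- split; first by rewrite /rowOf /= (sg0 sH) /det /= !mul0r subrr eqxx.
  move=> x y /andP [Hx /eqP dx] /andP [Hy /eqP dy]; apply/andP; split.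
    exact: sH.2.
  apply/eqP; move: dx dy; rewrite /det /= => dx dy.
  have -> : (x.1 - y.1) * (sel H).2 - (x.2 - y.2) * (sel H).1 =
    (x.1 * (sel H).2 - x.2 * (sel H).1) - (y.1 * (sel H).2 - y.2 * (sel H).1) by ring.
  by rewrite dx dy subrr.
- by exists (sel H); split => //; rewrite /rowOf sel1 /det /= mulrC subrr eqxx.
- move=> x y /andP [_ /eqP dx] /andP [_ /eqP dy]; exact: coll3 sel0 dx dy.
Qed.

Lemma rowOf_sub H x : rowOf H x -> H x.
Proof. by case/andP. Qed.

Lemma sel_row H : Fin H -> rowOf H (sel H).
Proof.
move=> FH; have [sel1 _ _] := sel_spec (Fin_nz FH).
by rewrite /rowOf sel1 /det mulrC subrr eqxx.
Qed.

Definition Row (C : Z2 -> bool) : set (Z2 -> bool) := [set H | Fin H /\ rowOf H = C].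

Definition Per (N : nat) : set (Z2 -> bool) :=
  [set H | [/\ is_subgroup_Z2 H, H (N%:Z, 0) & H (0, N%:Z)]].

Lemma det_Per H x y : is_subgroup_Z2 H -> H x -> H y -> Per `|det x y|%N H.
Proof.
move=> sH Hx Hy.
have h1 : H (det x y, 0).
  have -> : ((det x y, 0) : Z2) = lc y.2 x (- x.2) y.
    by apply: injective_projections; rewrite /lc /det /=; ring.
  exact: sg_lc.
have h2 : H (0, det x y).
  have -> : ((0, det x y) : Z2) = lc (- y.1) x x.1 y.
    by apply: injective_projections; rewrite /lc /det /=; ring.
  exact: sg_lc.
split => //; rewrite abszE.
- have [d0|d0] := leP 0 (det x y).
    by rewrite ger0_norm.
  by rewrite ltr0_norm //; have := sg_opp sH h1; rewrite /= oppr0.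
- have [d0|d0] := leP 0 (det x y).
    by rewrite ger0_norm.
  by rewrite ltr0_norm //; have := sg_opp sH h2; rewrite /= oppr0.
Qed.

Lemma Per_shift N H x a b : Per N H -> H x -> H (x.1 + a * N%:Z, x.2 + b * N%:Z).
Proof.
case=> sH h1 h2 Hx.
have -> : ((x.1 + a * N%:Z, x.2 + b * N%:Z) : Z2) =
   ((x.1 + a * N%:Z) + b * 0, (x.2 + a * 0) + b * N%:Z).
  by apply: injective_projections => /=; rewrite !mulr0 ?addr0.
exact: (sg_add sH (sg_add sH Hx (sg_mul sH a h1)) (sg_mul sH b h2)).
Qed.

Lemma Per_mod N H x : Per N H -> H x = H ((x.1 %% N%:Z)%Z, (x.2 %% N%:Z)%Z).
Proof.
move=> PH; apply/idP/idP => Hx.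
  have := Per_shift (- (x.1 %/ N%:Z)%Z) (- (x.2 %/ N%:Z)%Z) PH Hx.
  congr (is_true (H _)); apply: injective_projections => /=; rewrite mulNr.
    by rewrite {1}(divz_eq x.1 N%:Z) addrAC subrr add0r.
  by rewrite {1}(divz_eq x.2 N%:Z) addrAC subrr add0r.
have := Per_shift (x.1 %/ N%:Z)%Z (x.2 %/ N%:Z)%Z PH Hx.
congr (is_true (H _)); apply: injective_projections => /=.
  by rewrite addrC -divz_eq.
by rewrite addrC -divz_eq.
Qed.

Lemma Per_finite N : (0 < N)%N -> finite_set (Per N).
Proof.
case: N => [//|n] _.
pose dec (f : {ffun 'I_n.+1 * 'I_n.+1 -> bool}) : Z2 -> bool :=
  fun x => f (inord `|(x.1 %% n.+1%:Z)%Z|%N, inord `|(x.2 %% n.+1%:Z)%Z|%N).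
apply: (@sub_finite_set _ _ (range dec)); last exact: finite_image finite_finset.
move=> H PH.
exists [ffun ij : 'I_n.+1 * 'I_n.+1 => H ((ij.1 : nat)%:Z, (ij.2 : nat)%:Z)] => //.
apply: funext => x; rewrite /dec ffunE /= (Per_mod x PH).
have md z : ((`|(z %% n.+1%:Z)%Z|%N : nat) < n.+1)%N.
  rewrite -ltz_nat gez0_abs; first exact: ltz_pmod.
  exact: modz_ge0.
rewrite !inordK ?md // !gez0_abs //; exact: modz_ge0.
Qed.


Lemma pick_finite (n : nat) : finite_set [set x : Z2 | (pickle x <= n)%N].
Proof.
apply: (@sub_finite_set _ _ ((fun i => odflt (0, 0) (unpickle i)) @` `I_n.+1)).
  move=> x xn; exists (pickle x); first by rewrite /mkset ltnS.
  by rewrite pickleK.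
exact/finite_image/finite_II.
Qed.

Lemma intB_finite (m : nat) : finite_set [set z : int | `|z| <= m%:Z].
Proof.
apply: (@sub_finite_set _ _ ((fun i : nat => i%:Z - m%:Z) @` `I_(m + m).+1)).
  move=> z zm; rewrite /mkset ler_norml in zm; case/andP: zm => z1 z2.
  have zp : 0 <= z + m%:Z by rewrite -lerBlDr sub0r.
  exists (absz (z + m%:Z)).
    rewrite /mkset -ltz_nat gez0_abs //; lia.
  by rewrite gez0_abs // addrK.
exact/finite_image/finite_II.
Qed.

Definition LinS (s : Z2) : set (Z2 -> bool) := [set C | Lin C /\ C s].

Lemma abs_le_mul (k z : int) : k != 0 -> `|z| <= `|k * z|.
Proof.
move=> k0; rewrite normrM ler_peMl // -[1]/(1%:Z).
by rewrite -gtz0_ge1 normr_gt0.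
Qed.

Lemma LinS_finite s : s != (0, 0) -> finite_set (LinS s).
Proof.
move=> s0.
pose B := [set z : int | `|z| <= (absz s.1)%:Z] `*` [set z : int | `|z| <= (absz s.2)%:Z].
apply: (@sub_finite_set _ _ (cyc @` B)); last first.
  by apply: finite_image; apply: finite_setX; apply: intB_finite.
move=> C [LC Cs]; have [g [g0 HC]] := Lin_cyc LC; rewrite HC in Cs *.
exists g; last by []. case/asboolP: Cs => k sk.
have k0 : k != 0 by apply: contra s0 => /eqP k0; rewrite sk k0 !mul0r.
by rewrite /B; split; rewrite /= sk /= abszE; apply: abs_le_mul.
Qed.

Definition HN (g u : Z2) (N : nat) : Z2 -> bool :=
  fun x => `[< exists a b : int, x = lc a g (b * N%:Z) u >].

Lemma det_lc a g c u : det (lc a g c u) g = c * det u g.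
Proof. by rewrite /det /lc /=; ring. Qed.

Lemma HN_sub g u N : is_subgroup_Z2 (HN g u N).
Proof.
split; first by apply/asboolP; exists 0, 0; apply: injective_projections; rewrite /lc /=; ring.
move=> x y /asboolP [a [b ->]] /asboolP [a' [b' ->]]; apply/asboolP.
exists (a - a'), (b - b'); apply: injective_projections; rewrite /lc /=; ring.
Qed.

Lemma HN_g g u N : HN g u N g.
Proof. apply/asboolP; exists 1, 0; apply: injective_projections; rewrite /lc /=; ring. Qed.

Lemma HN_Nu g u N : HN g u N (lc 0 g N%:Z u).
Proof. apply/asboolP; exists 0, 1; by rewrite mul1r. Qed.

Lemma HN_Fin g u N : (0 < N)%N -> det u g != 0 -> Fin (HN g u N).
Proof.
move=> N0 D0; split; first exact: HN_sub.
exists (lc 0 g N%:Z u), g; split; [exact: HN_Nu| exact: HN_g|].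
rewrite det_lc mulf_eq0 negb_or D0 andbT.
apply/negP => /eqP NZ; move: N0; by rewrite -ltz_nat NZ ltxx.
Qed.



Lemma HN_inj g u N M : (0 < N)%N -> (0 < M)%N -> det u g != 0 ->
  HN g u N = HN g u M -> N = M.
Proof.
move=> N0 M0 D0.
suff H : forall N M, (0 < N)%N -> (0 < M)%N -> HN g u N = HN g u M -> (M <= N)%N.
  move=> E; apply/eqP; rewrite eqn_leq; apply/andP; split.
    exact: H.
  exact: H.
move=> {}N {}M {}N0 {}M0 E.
have := HN_Nu g u N; rewrite E => /asboolP [a [b e]].
have := congr1 (fun x => det x g) e; rewrite !det_lc => NbM.
have {}NbM : N%:Z = b * M%:Z by apply: (mulIf D0).
have M0' : (0 < M%:Z) by rewrite ltz_nat.
have N0' : (0 < N%:Z) by rewrite ltz_nat.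
have bpos : 0 < b by rewrite -(pmulr_lgt0 _ M0') -NbM.
rewrite -lez_nat NbM ler_peMl //; exact: ltW.
Qed.

Definition Bnd (g : Z2) : nat :=
  \max_(i < (pickle g).+1)
     (match unpickle i with Some x => `|det x g|%N | None => 0%N end).

Lemma Bnd_ge g x : (pickle x <= pickle g)%N -> (`|det x g| <= Bnd g)%N.
Proof.
move=> px; rewrite -ltnS in px.
have := @leq_bigmax _ (fun i : 'I_(pickle g).+1 =>
  (match unpickle i with Some x => `|det x g|%N | None => 0%N end)) (Ordinal px).
by rewrite pickleK.
Qed.

Lemma det_lc2 a' c' a g u : det (lc a' g c' u) (lc a g 0 u) = a * (c' * det u g).
Proof. by rewrite /det /lc /=; ring. Qed.

Lemma HN_row g u N : g != (0, 0) -> det u g != 0 -> (Bnd g < N)%N ->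
  rowOf (HN g u N) = cyc g.
Proof.
move=> g0 D0 BN.
have N0 : (0 < N)%N by apply: leq_ltn_trans BN.
have FH := HN_Fin N0 D0.
have [s1 s0 smin] := sel_spec (Fin_nz FH).
have ps := smin g (HN_g g u N) g0.
have bd := Bnd_ge ps.
move: s1 s0 bd; set s := sel (HN g u N) => s1 s0 bd.
case/asboolP: s1 => a [b es].
have b0 : b = 0.
  apply/eqP; apply: contraT => b0.
  move: bd; rewrite es det_lc !abszM.
  have b1 : (0 < `|b|)%N by rewrite absz_gt0.
  have d1 : (0 < `|det u g|)%N by rewrite absz_gt0.
  move=> bd; have : (N <= `|b| * `|N%:Z| * `|det u g|)%N.
    have -> : `|N%:Z|%N = N by [].
    apply: leq_trans (leq_pmulr _ d1); exact: leq_pmull.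
  by move=> /leq_trans /(_ bd); rewrite leqNgt BN.
rewrite b0 mul0r in es.
have a0 : a != 0.
  apply: contra s0 => /eqP a0; rewrite es a0; apply/eqP.
  by apply: injective_projections; rewrite /lc /=; ring.
apply: funext => x; rewrite /rowOf -/s; apply/idP/idP.
  case/andP => /asboolP [a' [b' ->]] /eqP dx; apply/asboolP.
  move: dx; rewrite es det_lc2 => /eqP; rewrite mulf_eq0 (negbTE a0) /=.
  rewrite mulf_eq0 (negbTE D0) orbF => /eqP c0.
  exists a'; rewrite c0; apply: injective_projections; rewrite /lc /=; ring.
case/asboolP => k ->; apply/andP; split.
  apply/asboolP; exists k, 0; apply: injective_projections; rewrite /lc /=; ring.
by rewrite es /det /lc /=; apply/eqP; ring.
Qed.

Lemma le_of_mul (N M : nat) (b : int) : (0 < N)%N -> (0 < M)%N ->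
  N%:Z = b * M%:Z -> (M <= N)%N.
Proof.
move=> N0 M0 NbM.
have M0' : (0 < M%:Z) by rewrite ltz_nat.
have N0' : (0 < N%:Z) by rewrite ltz_nat.
have bpos : 0 < b by rewrite -(pmulr_lgt0 _ M0') -NbM.
rewrite -lez_nat NbM ler_peMl //; exact: ltW.
Qed.

Lemma nat_infinite (T : Type) (A : set T) (f : nat -> T) :
  injective f -> (forall n, A (f n)) -> infinite_set A.
Proof.
move=> fi fA finA.
have : finite_set (f @^-1` A) by apply: finite_preimage => // x y _ _; exact: fi.
have -> : f @^-1` A = setT by apply/seteqP; split => // n _; exact: fA.
exact: infinite_nat.
Qed.

Lemma Row_infinite C : Lin C -> infinite_set (Row C).
Proof.
move=> LC; have [g [g0 ->]] := Lin_cyc LC.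
pose u : Z2 := if g.2 != 0 then (1, 0) else (0, 1).
have D0 : det u g != 0.
  rewrite /u; case: ifP => g2; rewrite /det /=.
    by rewrite mul1r mul0r subr0.
  rewrite mul0r mul1r sub0r oppr_eq0; apply: contra g0 => g1.
  by apply/eqP; apply: injective_projections => /=; apply/eqP => //; move/negbT: g2; rewrite negbK.
apply: (@nat_infinite _ _ (fun j => HN g u (Bnd g + 1 + j))).
  move=> i j /HN_inj E; apply/eqP; rewrite -(eqn_add2l (Bnd g + 1)); apply/eqP; apply: E => //.
  - by rewrite addn1 addSn.
  - by rewrite addn1 addSn.
move=> j; split.
  by apply: HN_Fin => //; rewrite addn1 addSn.
apply: HN_row => //; rewrite addn1 addSn ltnS; exact: leq_addr.
Qed.

Lemma cyc_inj_nat (n m : nat) : cyc (n.+1%:Z, 0) = cyc (m.+1%:Z, 0) -> (m <= n)%N.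
Proof.
move=> E; have := cyc_g (n.+1%:Z, 0); rewrite E => /asboolP [k [e1 _]].
by rewrite -ltnS; apply: (le_of_mul _ _ e1).
Qed.

Lemma Lin_infinite : infinite_set Lin.
Proof.
apply: (@nat_infinite _ _ (fun n => cyc (n.+1%:Z, 0))).
  move=> n m E; apply/eqP; rewrite eqn_leq; apply/andP; split; apply: cyc_inj_nat => //.
move=> n; apply: cyc_Lin; apply/negP => /eqP [] /eqP.
by [].
Qed.

Lemma Lin_countable : countable Lin.
Proof.
apply: (@sub_countable _ _ _ (\bigcup_(s in [set s : Z2 | s != (0, 0)]) LinS s)).
  apply: subset_card_le => C LC; have [_ [x [Cx x0]] _] := LC.
  by exists x => //; split.
apply: bigcup_countable; first exact: countableP.
by move=> s s0; apply: finite_set_countable; apply: LinS_finite.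
Qed.

Lemma Fin_countable : countable Fin.
Proof.
apply: (@sub_countable _ _ _ (\bigcup_(N in [set N : nat | (0 < N)%N]) Per N)).
  apply: subset_card_le => H [sH [x [y [Hx Hy dxy]]]].
  exists `|det x y|%N; first by rewrite /= absz_gt0.
  exact: det_Per.
apply: bigcup_countable; first exact: countableP.
by move=> N N0; apply: finite_set_countable; apply: Per_finite.
Qed.

Lemma Row_countable C : countable (Row C).
Proof.
apply: (sub_countable _ Fin_countable).
by apply: subset_card_le => H [].
Qed.

Lemma enum_set (A : set (Z2 -> bool)) : countable A -> infinite_set A ->
  exists e : nat -> (Z2 -> bool), set_bij [set: nat] A e.
Proof.
move=> cA iA; have := eq_card_nat cA iA; rewrite card_eq_sym.
by move/card_set_bijP.
Qed.

Lemma nat_bound (A : set nat) : finite_set A -> exists J, forall j, A j -> (j < J)%N.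
Proof.
case/finite_fsetP => X ->; exists (\max_(i <- finmap.enum_fset X) i).+1 => j Xj.
by rewrite ltnS; apply: (@leq_bigmax_seq _ _ xpredT id j).
Qed.

Lemma Row_bad C H t g : Lin C -> C g -> g != (0, 0) -> Row C H -> H t != C t ->
  det t g != 0 /\ Per `|det t g|%N H.
Proof.
move=> LC Cg g0 [FH RH] Htne.
have sub : forall x, C x -> H x by move=> x; rewrite -RH; exact: rowOf_sub.
have [Ht nCt] : H t /\ ~~ C t.
  case: (boolP (C t)) => Ct; first by move: Htne; rewrite Ct (sub _ Ct).
  by move: Htne; rewrite (negbTE Ct); case: (H t).
have dts : det t (sel H) != 0.
  apply: contra nCt => d0; by rewrite -RH /rowOf Ht d0.
have dgs : det g (sel H) = 0.
  by move: Cg; rewrite -RH => /andP [_ /eqP].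
have dtg : det t g != 0.
  apply: contra dts => /eqP d0; apply/eqP; apply: (coll3 g0) => //.
  rewrite /det; rewrite /det in dgs.
  have -> : (sel H).1 * g.2 - (sel H).2 * g.1 = - (g.1 * (sel H).2 - g.2 * (sel H).1) by ring.
  by rewrite dgs oppr0.
split => //; apply: det_Per => //; [exact: FH.1 | exact: sub].
Qed.

Lemma conv_lem C (e : nat -> (Z2 -> bool)) : Lin C -> set_bij setT (Row C) e ->
  forall t, exists J, forall j, (J <= j)%N -> e j t = C t.
Proof.
move=> LC [ef ei es] t; have LC' := LC; case: LC' => _ [g [Cg g0]] _.
pose B := [set H | Row C H /\ H t != C t].
have finB : finite_set B.
  have [d0|d0] := eqVneq (det t g) 0.
    apply: (@sub_finite_set _ _ set0) => // H [RH Hne].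
    by have [] := Row_bad LC Cg g0 RH Hne; rewrite d0 eqxx.
  apply: (@sub_finite_set _ _ (Per `|det t g|%N)); last first.
    by apply: Per_finite; rewrite absz_gt0.
  by move=> H [RH Hne]; have [] := Row_bad LC Cg g0 RH Hne.
have : finite_set (e @^-1` B).
  apply: finite_preimage => // x y _ _; apply: ei; exact: mem_set.
case/nat_bound => J HJ; exists J => j Jj.
apply/eqP; apply: contraT => ne.
have : (j < J)%N by apply: HJ; split => //; apply: ef.
by rewrite ltnNge Jj.
Qed.

Lemma top_lem (eL : nat -> (Z2 -> bool)) (eR : nat -> nat -> (Z2 -> bool)) :
  set_bij setT Lin eL -> (forall k, set_bij setT (Row (eL k)) (eR k)) ->
  forall t, t != (0, 0) -> exists K, forall k, (K <= k)%N ->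
    eL k t = false /\ forall j, eR k j t = false.
Proof.
move=> [ef ei es] eRb t t0.
pose S := [set C | Lin C /\ (C t \/ exists H, Row C H /\ H t)].
have finS : finite_set S.
  apply: (@sub_finite_set _ _
     (\bigcup_(s in [set s : Z2 | (pickle s <= pickle t)%N /\ s != (0, 0)]) LinS s)).
    move=> C [LC [Ct|[H [[FH RH] Ht]]]].
      by exists t => //; split.
    have [s1 s0 smin] := sel_spec (Fin_nz FH).
    exists (sel H); first by split => //; apply: smin.
    split => //; rewrite -RH; exact: sel_row.
  apply: bigcup_finite.
    apply: (@sub_finite_set _ _ [set x : Z2 | (pickle x <= pickle t)%N]).
      by move=> x [].
    exact: pick_finite.
  by move=> s [_ s0]; apply: LinS_finite.
have : finite_set (eL @^-1` S).
  apply: finite_preimage => // x y _ _; apply: ei; exact: mem_set.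
case/nat_bound => K HK; exists K => k Kk.
have nS : ~ S (eL k) by move=> Sk; have := HK _ Sk; rewrite ltnNge Kk.
have Lk : Lin (eL k) by apply: ef.
split.
  by apply/negP => Ct; apply: nS; split => //; left.
move=> j; apply/negP => Ht; apply: nS; split => //; right.
exists (eR k j); split => //; have [eRf _ _] := eRb k; exact: eRf.
Qed.

Lemma ptws_cvg (F : set_system indicator_space) (f : indicator_space) :
  Filter F -> (forall t, \forall g \near F, g t = f t) -> F --> f.
Proof.
move=> FF Ht.
apply/cvg_sup => i A /=.
move: A; rewrite (@nbhsE (initial_topology (fun g : indicator_space => g i)) f).
move=> A [B [[V oV <-] Vf] BA]; apply: filterS BA _.
by apply: filterS (Ht i) => g /= ->.
Qed.

Lemma nb_some (m : nat) (P : Nbar -> Prop) : P (Some m) -> nbhs (Some m : Nbar) P.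
Proof. move=> Pm; rewrite /nbhs /=; rewrite nbhs_principalE; exact/principal_filterP. Qed.

Lemma nb_none (M : nat) (P : Nbar -> Prop) :
  P None -> (forall n, (M <= n)%N -> P (Some n)) -> nbhs (None : Nbar) P.
Proof.
move=> P0 PS; exists `I_M.
  by split; [exact/finite_compact/finite_II| exact: discrete_closed].
case=> [n|_]; last by [].
case=> [[k /= kM [<-]]|//].
by apply: PS; rewrite leqNgt; apply/negP => /kM.
Qed.

Lemma nb_pair (a b : Nbar) (A B : Nbar -> Prop) (P : Nbar * Nbar -> Prop) :
  nbhs a A -> nbhs b B -> (forall x y, A x -> B y -> P (x, y)) ->
  nbhs ((a, b) : Nbar * Nbar) P.
Proof.
move=> nA nB H; exists (A, B) => //= -[x y] [/= Ax By]; exact: H.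
Qed.

Definition Phi (x0 : Chabauty_Z2) (c : nat -> Chabauty_Z2)
  (h : nat -> nat -> Chabauty_Z2) (p : Nbar * Nbar) : Chabauty_Z2 :=
  match p with
  | (None, None) => x0
  | (Some m, None) => c (2 * m)%N
  | (None, Some n) => c (2 * n + 1)%N
  | (Some m, Some n) => if (m <= n)%N then h (2 * m)%N (n - m)%N
                        else h (2 * n + 1)%N (m - n - 1)%N
  end.

Lemma chab_cont (X : topologicalType) (f : X -> Chabauty_Z2) :
  (forall x t, \forall y \near x, val (f y) t = val (f x) t) -> continuous f.
Proof.
move=> H.
apply: (@continuous_comp_initial _ _ _ (set_val : Chabauty_Z2 -> indicator_space)).
move=> x; apply: ptws_cvg => t.
exact: H.
Qed.

Lemma Phi_cont x0 c h
 (conv : forall k t, exists J, forall j, (J <= j)%N -> val (h k j) t = val (c k) t)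
 (top : forall t, exists K, forall k, (K <= k)%N ->
     val (c k) t = val x0 t /\ forall j, val (h k j) t = val x0 t) :
 continuous (Phi x0 c h).
Proof.
apply: chab_cont => -[[m|] [n|]] t.
- apply: (@nb_pair _ _ [set Some m] [set Some n]); try exact: nb_some.
  by move=> x y -> ->.
- have [J HJ] := conv (2 * m)%N t.
  apply: (@nb_pair _ _ [set Some m] (fun y => y = None \/ exists2 n, (m + J <= n)%N & y = Some n)).
  + exact: nb_some.
  + apply: (@nb_none (m + J)); first by left.
    by move=> n mn; right; exists n.
  move=> x y -> [->//|[n mn ->]] /=.
  have -> : (m <= n)%N by lia.
  by apply: HJ; lia.
- have [J HJ] := conv (2 * n + 1)%N t.
  apply: (@nb_pair _ _ (fun y => y = None \/ exists2 m, (n + J + 1 <= m)%N & y = Some m) [set Some n]).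
  + apply: (@nb_none (n + J + 1)); first by left.
    by move=> m mn; right; exists m.
  + exact: nb_some.
  move=> x y [-> -> //|[m mn ->] ->] /=.
  have -> : (m <= n)%N = false by apply/negbTE; lia.
  by apply: HJ; lia.
- have [K HK] := top t.
  pose A := fun y : Nbar => y = None \/ exists2 n, (K <= n)%N & y = Some n.
  apply: (@nb_pair _ _ A A).
  + by apply: (@nb_none K); [left|move=> n Kn; right; exists n].
  + by apply: (@nb_none K); [left|move=> n Kn; right; exists n].
  move=> x y [->|[m Km ->]] [->|[n Kn ->]] //=.
  + by case: (HK (2 * n + 1)%N _) => //; lia.
  + by case: (HK (2 * m)%N _) => //; lia.
  case: ifP => _.
  + by have [_ ->] := HK (2 * m)%N ltac:(lia).
  + by have [_ ->] := HK (2 * n + 1)%N ltac:(lia).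
Qed.

Lemma open_coord (t : Z2) (b : bool) :
  open [set r : Chabauty_Z2 | val r t = b].
Proof.
have -> : [set r : Chabauty_Z2 | val r t = b] =
  (set_val : Chabauty_Z2 -> indicator_space) @^-1`
     ((@proj Z2 (fun _ => bool) t) @^-1` [set b]) by [].
have H1 : continuous (set_val : Chabauty_Z2 -> indicator_space).
  exact: (@initial_continuous _ indicator_space set_val).
apply: (proj1 (continuousP _) H1).
have H2 : continuous (fun g : indicator_space => g t) :=
  @proj_continuous Z2 (fun _ => bool) t.
exact: (proj1 (continuousP _) H2 [set b] (discrete_open _)).
Qed.

Lemma chab_hausdorff : hausdorff_space Chabauty_Z2.
Proof.
rewrite open_hausdorff => p q pq.
have [t Ht] : exists t, val p t != val q t.
  apply: contrapT => /forallNP H; move/negP: pq; apply; apply/eqP.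
  apply: val_inj; apply: funext => t; apply/eqP/negPn/negP; exact: H.
exists ([set r : Chabauty_Z2 | val r t = val p t], [set r : Chabauty_Z2 | val r t = val q t]).
  by rewrite !inE.
split; try exact: open_coord.
apply/eqP; apply/seteqP; split => // r [/= -> E]; by move/eqP: Ht.
Qed.

Lemma lemma_G (x0 : Chabauty_Z2) (c : nat -> Chabauty_Z2) (h : nat -> nat -> Chabauty_Z2)
 (hc0 : forall k, c k <> x0) (hh0 : forall k j, h k j <> x0)
 (hch : forall k k' j, c k <> h k' j)
 (cinj : injective c) (hinj : forall k j k' j', h k j = h k' j' -> k = k' /\ j = j')
 (surj : forall p, p = x0 \/ (exists k, p = c k) \/ exists k j, p = h k j)
 (conv : forall k t, exists J, forall j, (J <= j)%N -> val (h k j) t = val (c k) t)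
 (top : forall t, exists K, forall k, (K <= k)%N ->
     val (c k) t = val x0 t /\ forall j, val (h k j) t = val x0 t) :
 homeomorphic Chabauty_Z2 (Nbar * Nbar)%type.
Proof.
set F := Phi x0 c h.
have Fc : continuous F by exact: Phi_cont.
have Fsurj : forall p, exists y, F y = p.
  move=> p; case: (surj p) => [->|[[k ->]|[k [j ->]]]].
  - by exists (None, None).
  - have [e|o] := boolP (odd k).
    + exists (None, Some k./2); rewrite /F /=; congr c.
      by rewrite -[RHS]odd_double_half e addnC mul2n.
    + exists (Some k./2, None); rewrite /F /=; congr c.
      by rewrite -[RHS]odd_double_half (negbTE o) mul2n.
  - have [e|o] := boolP (odd k).
    + exists (Some (k./2 + j + 1)%N, Some k./2); rewrite /F /=.
      have -> : (k./2 + j + 1 <= k./2)%N = false by apply/negbTE; lia.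
      congr h; last by lia.
      by rewrite -[RHS]odd_double_half e addnC mul2n.
    + exists (Some k./2, Some (k./2 + j)%N); rewrite /F /=.
      have -> : (k./2 <= k./2 + j)%N by lia.
      congr h; last by lia.
      by rewrite -[RHS]odd_double_half (negbTE o) mul2n.
have Finj : injective F.
  move=> [[m|] [n|]] [[m'|] [n'|]]; rewrite /F /=;
    repeat match goal with |- context [if ?b then _ else _] => case: ifP => ? end;
    move=> E;
    repeat match goal with
    | E : h _ _ = h _ _ |- _ => move: (hinj _ _ _ _ E) => {E} [? ?]
    | E : c _ = c _ |- _ => move: (cinj _ _ E) => {E} ?
    | E : c _ = h _ _ |- _ => by case: (hch _ _ _ E)
    | E : h _ _ = c _ |- _ => by case: (hch _ _ _ (esym E))
    | E : c _ = x0 |- _ => by case: (hc0 _ E)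
    | E : x0 = c _ |- _ => by case: (hc0 _ (esym E))
    | E : h _ _ = x0 |- _ => by case: (hh0 _ _ E)
    | E : x0 = h _ _ |- _ => by case: (hh0 _ _ (esym E))
    end; try done; try (congr (Some _, Some _); lia); try (congr (Some _, None); lia);
    try (congr (None, Some _); lia); try lia.
pose G := fun p => projT1 (cid (Fsurj p)).
have FG : cancel G F by move=> p; rewrite /G; case: cid.
have GF : cancel F G by move=> y; apply: Finj; rewrite FG.
exists G, F; split => //; split => //; split => //.
apply/continuous_closedP => A cA.
have -> : G @^-1` A = F @` A.
  apply/seteqP; split => [p Ap|_ [y Ay <-]]; last by rewrite /= GF.
  by exists (G p) => //; rewrite FG.
apply: compact_closed; first exact: chab_hausdorff.
apply: continuous_compact; first exact: continuous_subspaceT.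
apply: (@subclosed_compact _ A setT cA) => //.
have -> : [set: Nbar * Nbar] = [set: Nbar] `*` [set: Nbar] by rewrite setXTT.
apply: compact_setX; exact: one_point_compactification_compact.
Qed.

Lemma zeroZ_sub : is_subgroup_Z2 zeroZ.
Proof.
split; first by rewrite /zeroZ eqxx.
by move=> x y /eqP -> /eqP ->; rewrite /zeroZ /= subrr.
Qed.

Theorem corollary2 : homeomorphic Chabauty_Z2 (Nbar * Nbar)%type.
Proof.
have [eL eLb] := enum_set Lin_countable Lin_infinite.
have [eLf eLi eLs] := eLb.
have eRex : forall k, exists e : nat -> (Z2 -> bool), set_bij [set: nat] (Row (eL k)) e.
  move=> k; apply: enum_set; first exact: Row_countable.
  by apply: Row_infinite; apply: eLf.
have [eR eRb] := choice eRex.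
have Lk k : Lin (eL k) by apply: eLf.
have Rkj k j : Row (eL k) (eR k j) by have [f _ _] := eRb k; apply: f.
have sL k : eL k \in subgroups_Z2 by apply: mem_set; have [] := Lk k.
have sR k j : eR k j \in subgroups_Z2 by apply: mem_set; have [[]] := Rkj k j.
have s0 : zeroZ \in subgroups_Z2 by apply: mem_set; exact: zeroZ_sub.
pose x0 : Chabauty_Z2 := exist _ zeroZ s0.
pose c k : Chabauty_Z2 := exist _ (eL k) (sL k).
pose h k j : Chabauty_Z2 := exist _ (eR k j) (sR k j).
apply: (@lemma_G x0 c h).
- move=> k /(congr1 val) /= E; apply: Lin_zero; rewrite -E; exact: Lk.
- move=> k j /(congr1 val) /= E; apply: Fin_zero; rewrite -E; exact: (Rkj k j).1.
- move=> k k' j /(congr1 val) /= E; apply: (@Lin_Fin (eL k)); first exact: Lk.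
  by rewrite E; exact: (Rkj k' j).1.
- move=> k k' /(congr1 val) /= E; apply: eLi => //; exact: mem_set.
- move=> k j k' j' /(congr1 val) /= E.
  have Ek : k = k'.
    apply: eLi; try exact: mem_set.
    by rewrite -(Rkj k j).2 -(Rkj k' j').2 E.
  subst k'; split => //; have [_ ei _] := eRb k; apply: ei => //; exact: mem_set.
- move=> p; have sp : is_subgroup_Z2 (val p) := set_mem (valP p).
  case: (partition sp) => [Z|L|F].
  + by left; apply: val_inj.
  + right; left; have [k _ Ek] := eLs _ L.
    by exists k; apply: val_inj => /=.
  + right; right; have [k _ Ek] := eLs _ (rowOf_Lin F).
    have RP : Row (eL k) (val p) by rewrite Ek.
    have [_ _ es] := eRb k; have [j _ Ej] := es _ RP.
    by exists k, j; apply: val_inj => /=.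
- move=> k t; exact: (conv_lem (Lk k) (eRb k) t).
- move=> t; case: (eqVneq t (0, 0)) => [->|t0].
    exists 0%N => k _ /=; split.
      by rewrite /zeroZ eqxx; have [sH _ _] := Lk k; rewrite (sg0 sH).
    by move=> j; rewrite /zeroZ eqxx (sg0 (Rkj k j).1.1).
  have [K HK] := top_lem eLb eRb t0.
  exists K => k Kk; have [a b] := HK k Kk; rewrite /= a /zeroZ (negbTE t0).
  by split => // j; rewrite b.
Qed.
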